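(* Under the setting and assumptions in the context, if $\Pr(Y(0)=1)>0$, then $$APCE_{AH}=\frac{\Pr(R=0,Y=1\mid Z=0)-\Pr(R=0,Y=1\mid Z=1)}{\Pr(Y(0)=1)}.$$
   Context: Units are drawn from a population (a probability space). Each unit has a binary assignment $Z\in\{0,1\}$ with $0<\Pr(Z=1)<1$, binary potential recommendations $R(0),R(1)\in\{0,1\}$, and binary potential outcomes $Y(0),Y(1)\in\{0,1\}$ indexed by the recommendation only (exclusion restriction). Observed quantities are $R=R(Z)$ and $Y=Y(R(Z))$. Assumptions: (Randomization) $Z$ is independent of $(R(0),R(1),Y(0),Y(1))$; (Monotonicity) $Y(1)\ge Y(0)$ almost surely. Principal strata: Always Low $AL=\{Y(0)=Y(1)=0\}$, Always High $AH=\{Y(0)=Y(1)=1\}$, Helpable $H=\{Y(0)=0,Y(1)=1\}$. For a stratum $J$ with positive probability, $APCE_J=E[R(1)-R(0)\mid J]$. *)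

(* Defs.v *)
From HB Require Import structures.
From mathcomp Require Import all_boot all_order all_algebra.
From mathcomp Require Import all_classical all_reals all_analysis.
Set Implicit Arguments. Unset Strict Implicit. Unset Printing Implicit Defensive.
Import Order.TTheory GRing.Theory Num.Theory.
Local Open Scope classical_set_scope.
Local Open Scope ring_scope.

Section Defs.
Context {d : measure_display} {T : measurableType d} {R : realType}.

Definition pr (P : probability T R) (A : set T) : R := fine (P A).

Definition condpr (P : probability T R) (A C : set T) : R :=
  pr P (A `&` C) / pr P C.

Definition cond_exp (P : probability T R) (X : T -> R) (J : set T) : R :=
  fine (\int[P]_(t in J) (X t)%:E)%E / pr P J.

Definition indep_rv {U V : Type} (P : probability T R) (Z : T -> U) (W : T -> V) :=
  forall (A : set U) (B : set V),
    P (Z @^-1` A `&` W @^-1` B) = (P (Z @^-1` A) * P (W @^-1` B))%E.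

Definition bin_rv (X : T -> bool) := measurable [set t | X t].

(* observed recommendation R = R(Z) and outcome Y = Y(R(Z)) *)
Definition obsR (Z R0 R1 : T -> bool) (t : T) : bool :=
  if Z t then R1 t else R0 t.
Definition obsY (Z R0 R1 Y0 Y1 : T -> bool) (t : T) : bool :=
  if obsR Z R0 R1 t then Y1 t else Y0 t.

Definition AH (Y0 Y1 : T -> bool) : set T := [set t | Y0 t /\ Y1 t].

Definition APCE (P : probability T R) (R0 R1 : T -> bool) (J : set T) : R :=
  cond_exp P (fun t => (R1 t : nat)%:R - (R0 t : nat)%:R) J.
End Defs.

(* Main.v *)
Require Import Defs.
From HB Require Import structures.
From mathcomp Require Import all_boot all_order all_algebra.
From mathcomp Require Import all_classical all_reals all_analysis.
Import Order.TTheory GRing.Theory Num.Theory.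
Local Open Scope classical_set_scope.
Local Open Scope ring_scope.

Lemma prE {d : measure_display} {T : measurableType d} {R : realType}
  (P : probability T R) {A : set T} : measurable A -> P A = (pr P A)%:E.
Proof. by move=> mA; rewrite /pr fineK // fin_num_measure. Qed.

Lemma prDI {d : measure_display} {T : measurableType d} {R : realType}
  (P : probability T R) {A B : set T} : measurable A -> measurable B ->
  pr P A = pr P (A `\` B) + pr P (A `&` B).
Proof.
move=> mA mB; have := @measureDI _ _ _ P _ _ mA mB.
move=> h; rewrite /pr.
transitivity (fine (P (A `\` B) + P (A `&` B))%E); first exact: (congr1 fine h).
by rewrite fineD // fin_num_measure //;
  [exact: measurableD | exact: measurableI].
Qed.

Lemma inb {T : Type} (f : T -> bool) t : (t \in [set u | f u]) = f t.
Proof. by apply/idP/idP; rewrite in_setE. Qed.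

Ltac sets :=
  repeat match goal with x := _ |- _ => subst x end;
  apply/seteqP; split => t; rewrite /= ?/obsY ?/obsR ?/preimage /=;
  repeat match goal with |- context [?f ?x] =>
    is_var x; is_var f; match type of (f x) with bool => case: (f x) end end;
  rewrite /=; rewrite /is_true; intuition congruence.

Theorem mainTheorem3 (d : measure_display) (T : measurableType d) (R : realType)
  (P : probability T R) (Z R0 R1 Y0 Y1 : T -> bool)
  (mZ : bin_rv Z) (mR0 : bin_rv R0) (mR1 : bin_rv R1)
  (mY0 : bin_rv Y0) (mY1 : bin_rv Y1)
  (pZ : 0 < pr P [set t | Z t] < 1)
  (rand : indep_rv P Z (fun t => (R0 t, R1 t, Y0 t, Y1 t)))
  (mono : P [set t | Y0 t && ~~ Y1 t] = 0%E)
  (pY0 : 0 < pr P [set t | Y0 t]) :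
  APCE P R0 R1 (AH Y0 Y1) =
    (condpr P [set t | ~~ obsR Z R0 R1 t /\ obsY Z R0 R1 Y0 Y1 t] [set t | ~~ Z t]
     - condpr P [set t | ~~ obsR Z R0 R1 t /\ obsY Z R0 R1 Y0 Y1 t] [set t | Z t])
    / pr P [set t | Y0 t].
Proof.
set z := [set t | Z t]; set r0 := [set t | R0 t]; set r1 := [set t | R1 t].
set y0 := [set t | Y0 t]; set y1 := [set t | Y1 t].
have mAH : measurable (AH Y0 Y1).
  have -> : AH Y0 Y1 = y0 `&` y1 by [].
  exact: measurableI.
have null0 : pr P (y0 `\` y1) = 0.
  have -> : y0 `\` y1 = [set t | Y0 t && ~~ Y1 t].
    apply/seteqP; split=> t /=; rewrite /y0 /y1 /=.
      by case=> -> /negP.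
    by case/andP=> -> /negP.
  by rewrite /pr mono.
have null : forall A, measurable A -> A `<=` y0 `\` y1 -> pr P A = 0.
  move=> A mA sA; apply/eqP; rewrite eq_le; apply/andP; split.
    rewrite -null0 -lee_fin -(prE P mA) -prE; last exact: measurableD.
    by apply: le_measure => //; rewrite inE //; exact: measurableD.
  by rewrite /pr fine_ge0 // measure_ge0.
have mz : measurable z := mZ. have mr0 : measurable r0 := mR0.
have mr1 : measurable r1 := mR1. have my0 : measurable y0 := mY0.
have my1 : measurable y1 := mY1.
have hAH : AH Y0 Y1 = y0 `&` y1 by [].
have pAH : pr P (AH Y0 Y1) = pr P y0.
  by rewrite (prDI P my0 my1) null0 add0r hAH.
have key : forall r, measurable r -> pr P (r `&` AH Y0 Y1) = pr P (y0 `&` r).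
  move=> r mr; rewrite (prDI P (measurableI _ _ my0 mr) my1).
  rewrite (null ((y0 `&` r) `\` y1)); last first.
  - by move=> t [[? ?] ?]; split.
  - by apply: measurableD => //; exact: measurableI.
  by rewrite add0r hAH; congr (pr P _); apply/seteqP; split=> t /=; tauto.
have hapce : APCE P R0 R1 (AH Y0 Y1) = (pr P (y0 `&` r1) - pr P (y0 `&` r0)) / pr P y0.
  rewrite /APCE /cond_exp pAH -(key _ mr1) -(key _ mr0).
  rewrite (eq_integral (fun t => (\1_r1 t)%:E - (\1_r0 t)%:E)%E); last first.
    move=> t _; rewrite !indicE -EFinB !inb.
    by case: (R1 t); case: (R0 t).
  rewrite integralB_EFin //; last 2 first.
  - exact: (integrableS measurableT mAH (@subsetT _ _) (integrable_indic P mr1)).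
  - exact: (integrableS measurableT mAH (@subsetT _ _) (integrable_indic P mr0)).
  rewrite !integral_indic // /pr fineB // fin_num_measure //; exact: measurableI.
set W := fun t => (R0 t, R1 t, Y0 t, Y1 t).
set E0 := [set t | ~~ obsR Z R0 R1 t /\ obsY Z R0 R1 Y0 Y1 t].
have pnz : pr P [set t | ~~ Z t] != 0.
  have -> : [set t | ~~ Z t] = ~` z by sets.
  have h := congr1 fine (probability_setC P mz).
  rewrite /pr; rewrite [X in X != _](_ : _ = fine (1 - P z)%E); last exact: h.
  rewrite (prE P mz) -EFinB /=.
  by case/andP: pZ => _ h1; rewrite subr_eq0 eq_sym lt_eqF.
have pz : pr P z != 0 by case/andP: pZ => h _; rewrite gt_eqF.
have c0 : condpr P E0 [set t | ~~ Z t] = pr P (y0 `\` r0).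
  rewrite /condpr.
  have -> : E0 `&` [set t | ~~ Z t] =
    Z @^-1` [set false] `&` W @^-1` [set w | ~~ w.1.1.1 && w.1.2] by sets.
  have h := congr1 fine (rand [set false] [set w | ~~ w.1.1.1 && w.1.2]).
  rewrite /pr [X in X / _](_ : _ = fine (P (Z @^-1` [set false]) * P (W @^-1` [set w | ~~ w.1.1.1 && w.1.2]))%E); last exact: h.
  have -> : Z @^-1` [set false] = [set t | ~~ Z t] by sets.
  have -> : W @^-1` [set w | ~~ w.1.1.1 && w.1.2] = y0 `\` r0 by sets.
  rewrite (prE P (measurableD my0 mr0)).
  have mnz : measurable [set t | ~~ Z t].
    have -> : [set t | ~~ Z t] = ~` z by sets.
    exact: measurableC.
  rewrite (prE P mnz) -EFinM /= -/(pr P _).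
  by rewrite mulrAC divff // mul1r.
have c1 : condpr P E0 z = pr P (y0 `\` r1).
  rewrite /condpr.
  have -> : E0 `&` z =
    Z @^-1` [set true] `&` W @^-1` [set w | ~~ w.1.1.2 && w.1.2] by sets.
  have h := congr1 fine (rand [set true] [set w | ~~ w.1.1.2 && w.1.2]).
  rewrite /pr [X in X / _](_ : _ = fine (P (Z @^-1` [set true]) * P (W @^-1` [set w | ~~ w.1.1.2 && w.1.2]))%E); last exact: h.
  have -> : Z @^-1` [set true] = z by sets.
  have -> : W @^-1` [set w | ~~ w.1.1.2 && w.1.2] = y0 `\` r1 by sets.
  rewrite (prE P (measurableD my0 mr1)) (prE P mz) -EFinM /= -/(pr P _).
  by rewrite mulrAC divff // mul1r.
have e0 := prDI P my0 mr0; have e1 := prDI P my0 mr1.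
rewrite hapce c0 c1; congr (_ / _).
move: e0 e1; move: (pr P y0) (pr P (y0 `\` r0)) (pr P (y0 `&` r0))
  (pr P (y0 `\` r1)) (pr P (y0 `&` r1)) => a b c e f h0 h1.
have H : b = e + f - c by rewrite -h1 h0 addrK.
by rewrite H addrAC (addrC e f) addrK.
Qed.
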